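(* Consider $N$ learners $\mathcal V=\{1,\dots,N\}$ running the privacy-preserving decentralized aggregation algorithm described in the context for rounds $t=1,\dots,T$, with communication graphs $\mathcal G^{(t)}$ that are undirected, connected, and fixed within each round $t$. Let $A^{(t)}=[a_{ij}^{(t)}]\in\mathbb R^{N\times N}$ be the Metropolis–Hastings matrix of $\mathcal G^{(t)}$ (with $a_{ij}^{(t)}=0$ when $j\notin\bar{\mathcal N}_i^{(t)}$), and let $1_N$ be the all-ones vector in $\mathbb R^N$. Suppose the prime $p$ and the number of consensus iterations $K$ satisfy $$p>\max\Big\{N,\;1+2\cdot 10^{\sigma}N\max_{t,i,l}|\theta_{il}^{(t)}|\Big\},\qquad \max_{t}\,2p\sqrt N\,\big\|N(A^{(t)})^K-1_N1_N^T\big\|<1,$$ where the maximum is over $t\in\{1,\dots,T\}$, $i\in\mathcal V$, $l\in\{1,\dots,n\}$, and $\|\cdot\|$ is the $\ell_2$ (spectral) norm of a matrix. Then $\tilde\theta_i^{(t)}=\theta^{(t)}=\sum_{j\in\mathcal V}w_j\theta_j^{(t)}$ for all $i\in\mathcal V$ and all $t\in\{1,\dots,T\}$.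
   Context: Setting. There are $N$ learners $\mathcal V=\{1,\dots,N\}$ and a model dimension $n$. Each learner $i$ has a fixed weight $w_i\in(0,1]$. In each round $t\in\{1,\dots,T\}$ each learner $i$ holds a local model $\theta_i^{(t)}=(\theta_{i1}^{(t)},\dots,\theta_{in}^{(t)})\in\mathbb R^n$ (produced by arbitrary local training), and the desired global model is $\theta^{(t)}=\sum_{i\in\mathcal V}w_i\theta_i^{(t)}$. Put $\bar\theta_i^{(t)}(0)=w_i\theta_i^{(t)}$. A precision level $\sigma\in\mathbb N$ is fixed: all real numbers are kept to $\sigma$ fractional digits, so in particular $10^\sigma\bar\theta_{il}^{(t)}(0)\in\mathbb Z$. In round $t$ the communication graph is $\mathcal G^{(t)}=(\mathcal V,\mathcal E^{(t)})$; $\mathcal N_i^{(t)}=\{j\neq i:(i,j)\in\mathcal E^{(t)}\}$ and $\bar{\mathcal N}_i^{(t)}=\mathcal N_i^{(t)}\cup\{i\}$. Algorithm (parameters: a prime $p$ and positive integers $T,K$, agreed by all learners). In each round $t$: (1) Metropolis–Hastings weights: each learner $i$ sets $a_{ij}^{(t)}=1/(\max\{|\mathcal N_i^{(t)}|,|\mathcal N_j^{(t)}|\}+1)$ for $j\in\mathcal N_i^{(t)}$, $a_{ii}^{(t)}=1-\sum_{j\in\mathcal N_i^{(t)}}a_{ij}^{(t)}$, and $a_{ij}^{(t)}=0$ otherwise. (2) Share generation: for each $j\in\bar{\mathcal N}_i^{(t)}$ learner $i$ computes $\delta_j=\prod_{r\in\bar{\mathcal N}_i^{(t)},r\ne j}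 r\,(r-j)^{-1}\bmod p$ (inverses in $\mathbb Z_p$). For each $l\in\{1,\dots,n\}$, with $\tau=|\mathcal N_i^{(t)}|$, learner $i$ picks fresh independent $c_1,\dots,c_\tau\in\mathbb Z_p$ uniformly at random with $c_\tau\ne0$, forms $H(\eta)=10^\sigma\bar\theta_{il}^{(t)}(0)+c_1\eta+\dots+c_\tau\eta^\tau$, sets $\mathcal H_{il}^{j(t)}=H(j)\bmod p$ and $\mathcal S_{il}^{j(t)}=\mathcal H_{il}^{j(t)}\delta_j\bmod p$ for $j\in\bar{\mathcal N}_i^{(t)}$. It sends $\mathcal S_i^{j(t)}=(\mathcal S_{il}^{j(t)})_{l=1}^n$ to each neighbor $j\in\mathcal N_i^{(t)}$ and keeps $\mathcal S_i^{i(t)}$. (3) Each learner $i$ forms $s_i^{(t)}(0)=\sum_{j\in\bar{\mathcal N}_i^{(t)}}\mathcal S_j^{i(t)}\bmod p$ (componentwise, values in $\{0,\dots,p-1\}$) and sends it to its neighbors. (4) For $k=0,\dots,K-1$ each learner $i$ computes, in real arithmetic, $s_i^{(t)}(k+1)=a_{ii}^{(t)}s_i^{(t)}(k)+\sum_{j\in\mathcal N_i^{(t)}}a_{ij}^{(t)}s_j^{(t)}(k)$ and sends it to its neighbors. (5) Each learner $i$ sets, for each $l$, $z_{il}^{(t)}=\lfloor N s_{il}^{(t)}(K)\rceil\bmod p$, where $\lfloor a\rceil$ is rounding to the nearest integer ($\lfloor a\rceil=\lfloor a\rfloor$ if $a-\lfloor a\rfloor<0.5$, else $\lceil a\rceil$),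 and $\tilde\theta_{il}^{(t)}=z_{il}^{(t)}/10^\sigma$ if $0\le z_{il}^{(t)}\le (p-1)/2$, $\tilde\theta_{il}^{(t)}=(z_{il}^{(t)}-p)/10^\sigma$ if $(p+1)/2\le z_{il}^{(t)}<p$; it sets $\tilde\theta_i^{(t)}=(\tilde\theta_{il}^{(t)})_{l=1}^n$ (used as its initial model for the next round's local training). *)

(* Defs.v *)
From HB Require Import structures.
From mathcomp Require Import all_boot all_order all_algebra.
From mathcomp Require Import classical_sets reals.
Set Implicit Arguments. Unset Strict Implicit. Unset Printing Implicit Defensive.
Import Order.TTheory GRing.Theory Num.Theory.
Local Open Scope ring_scope.
Local Open Scope classical_set_scope.

(* Communication graph of a round: a relation on learners 'I_N (learner i : 'I_N
   is the paper's learner i+1).  Neighbours exclude i itself. *)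
Definition nbrs (N : nat) (e : rel 'I_N) (i : 'I_N) : {set 'I_N} :=
  [set j | (j != i) && e i j].
Definition cnbrs (N : nat) (e : rel 'I_N) (i : 'I_N) : {set 'I_N} :=
  i |: nbrs e i.

Definition mh_weight (R : numFieldType) (N : nat) (e : rel 'I_N) (i j : 'I_N) : R :=
  if j \in nbrs e i then ((maxn #|nbrs e i| #|nbrs e j|).+1%:R)^-1
  else if j == i then
    1 - \sum_(k in nbrs e i) ((maxn #|nbrs e i| #|nbrs e k|).+1%:R)^-1
  else 0.
Definition mh_matrix (R : numFieldType) (N : nat) (e : rel 'I_N) : 'M[R]_N :=
  \matrix_(i, j) mh_weight R e i j.

Definition vnorm2 (R : realType) (N : nat) (x : 'cV[R]_N) : R :=
  Num.sqrt (\sum_i (x i 0) ^+ 2).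
Definition spec_norm (R : realType) (N : nat) (M : 'M[R]_N) : R :=
  sup [set vnorm2 (M *m x) | x in [set x : 'cV[R]_N | vnorm2 x <= 1]].

Definition lab (p N : nat) (i : 'I_N) : 'F_p := (i.+1)%:R.

(* Lagrange coefficient delta_j computed by learner i *)
Definition delta (p N : nat) (e : rel 'I_N) (i j : 'I_N) : 'F_p :=
  \prod_(r in cnbrs e i | r != j) (lab p r * (lab p r - lab p j)^-1).

Definition Hpoly (p : nat) (secret : int) (c : nat -> 'F_p) (tau : nat)
  (eta : 'F_p) : 'F_p :=
  secret%:~R + \sum_(1 <= k < tau.+1) c k * eta ^+ k.

(* Share S_{il}^{j} sent by learner i to j (Theta i l = 10^sigma * thetabar_il(0)) *)
Definition share (p N n : nat) (e : rel 'I_N) (Theta : 'I_N -> 'I_n -> int)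
  (c : 'I_N -> 'I_n -> nat -> 'F_p) (i j : 'I_N) (l : 'I_n) : 'F_p :=
  Hpoly (Theta i l) (c i l) #|nbrs e i| (lab p j) * delta p e i j.

Definition s0 (R : realType) (p N n : nat) (e : rel 'I_N)
  (Theta : 'I_N -> 'I_n -> int) (c : 'I_N -> 'I_n -> nat -> 'F_p)
  (i : 'I_N) (l : 'I_n) : R :=
  (nat_of_ord (\sum_(j in cnbrs e i) share e Theta c j i l))%:R.

Definition cons_step (R : realType) (N : nat) (e : rel 'I_N) (s : 'I_N -> R)
  : 'I_N -> R :=
  fun i => mh_weight R e i i * s i + \sum_(j in nbrs e i) mh_weight R e i j * s j.
Definition sK (R : realType) (p N n K : nat) (e : rel 'I_N)
  (Theta : 'I_N -> 'I_n -> int) (c : 'I_N -> 'I_n -> nat -> 'F_p)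
  (i : 'I_N) (l : 'I_n) : R :=
  iter K (cons_step e) (fun j => s0 R e Theta c j l) i.

Definition round_nearest (R : realType) (a : R) : int :=
  if a - (Num.floor a)%:~R < 2^-1 then Num.floor a else Num.ceil a.

Definition decode (R : realType) (p sigma : nat) (z : int) : R :=
  if z%:~R <= (p%:R - 1) / 2 :> R then z%:~R / 10%:R ^+ sigma
  else (z - p%:Z)%:~R / 10%:R ^+ sigma.

Definition tilde_theta (R : realType) (p sigma N n K : nat) (e : rel 'I_N)
  (Theta : 'I_N -> 'I_n -> int) (c : 'I_N -> 'I_n -> nat -> 'F_p)
  (i : 'I_N) (l : 'I_n) : R :=
  decode R p sigma
    ((round_nearest (N%:R * sK R K e Theta c i l) %% p%:Z)%Z).

(* Main.v *)
Require Import Defs.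
From HB Require Import structures.
From mathcomp Require Import all_boot all_order all_algebra.
From mathcomp Require Import classical_sets reals.
Import Order.TTheory GRing.Theory Num.Theory.
Local Open Scope ring_scope.
Lemma size_prodX (F : fieldType) (I : finType) (A : {set I}) (x : I -> F) :
  size (\prod_(r in A) ('X - (x r)%:P)) = #|A|.+1.
Proof. by rewrite -big_enum size_prod_XsubC cardE. Qed.

Lemma lagrange0 (F : fieldType) (I : finType) (S : {set I}) (x : I -> F) (P : {poly F}) :
  {in S &, injective x} -> (size P <= #|S|)%N ->
  \sum_(i in S) P.[x i] * \prod_(r in S :\ i) (x r / (x r - x i)) = P.[0].
Proof.
move=> xinj szP.
pose L i := \prod_(r in S :\ i) ('X - (x r)%:P).
pose c i := \prod_(r in S :\ i) (x i - x r)^-1.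
pose Q := \sum_(i in S) (P.[x i] * c i) *: L i.
have cNZ i : i \in S -> c i != 0.
  move=> iS; rewrite prodf_seq_neq0; apply/allP => r _; apply/implyP => /setD1P [ri rS].
  by rewrite invr_eq0 subr_eq0; apply/eqP => /xinj => h; move: ri; rewrite h ?eqxx.
have LxE i j : i \in S -> j \in S -> (L i).[x j] = if j == i then (c i)^-1 else 0.
  move=> iS jS; rewrite /L horner_prod; case: eqP => [->|/eqP ji].
    by rewrite /c -prodfV; apply: eq_bigr => r _; rewrite hornerXsubC invrK.
  by rewrite (bigD1 j) /= ?hornerXsubC ?subrr ?mul0r // !inE ji.
have QxE j : j \in S -> Q.[x j] = P.[x j].
  move=> jS; rewrite /Q horner_sum (bigD1 j) //= big1 ?addr0.
    by rewrite hornerZ LxE // eqxx -mulrA mulfV ?mulr1 ?cNZ.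
  by move=> i /andP [iS ij]; rewrite hornerZ LxE // eq_sym (negbTE ij) mulr0.
have szQ : (size Q <= #|S|)%N.
  apply: (leq_trans (size_sum _ _ _)); apply/bigmax_leqP => i iS.
  apply: (leq_trans (size_scale_leq _ _)).
  by rewrite /L size_prodX (cardsD1 i S) iS.
have PQ : P = Q.
  apply/eqP; rewrite -subr_eq0; apply/eqP.
  apply: (@roots_geq_poly_eq0 _ _ [seq x i | i in S]).
  - by apply/allP => y /fintype.imageP [j jS ->]; rewrite /root hornerD hornerN QxE // subrr.
  - by rewrite map_inj_in_uniq ?enum_uniq // => a b; rewrite !mem_enum; apply: xinj.
  - rewrite size_map -cardE; apply: (leq_trans (size_polyD _ _)).
    by rewrite geq_max szP size_polyN szQ.
have -> : P.[0] = Q.[0] by rewrite -PQ.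
rewrite /Q horner_sum; apply: eq_bigr => i iS.
rewrite hornerZ /L horner_prod /c -mulrA -big_split /=; congr (_ * _).
apply: eq_bigr => r _; rewrite hornerXsubC sub0r -[x i - x r]opprB invrN mulrNN mulrC.
by [].
Qed.

Lemma lab_inj (p N : nat) : prime p -> (N < p)%N -> injective (@lab p N).
Proof.
move=> pp Np a b /(congr1 (@nat_of_ord _)); rewrite /lab !val_Fp_nat // !modn_small.
- by move=> [] /val_inj.
- by apply: leq_ltn_trans Np; exact: ltn_ord.
- by apply: leq_ltn_trans Np; exact: ltn_ord.
Qed.

Lemma card_cnbrs N (e : rel 'I_N) j : #|cnbrs e j| = #|nbrs e j|.+1.
Proof. by rewrite /cnbrs cardsU1 !inE eqxx. Qed.

Lemma mem_cnbrsC N (e : rel 'I_N) i j : symmetric e -> (j \in cnbrs e i) = (i \in cnbrs e j).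
Proof. by move=> se; rewrite !inE eq_sym se. Qed.

Lemma shares_j (p N n : nat) (e : rel 'I_N) (Theta : 'I_N -> 'I_n -> int)
  (c : 'I_N -> 'I_n -> nat -> 'F_p) j l : prime p -> (N < p)%N ->
  \sum_(i in cnbrs e j) share e Theta c j i l = (Theta j l)%:~R.
Proof.
move=> pp Np.
pose tau := #|nbrs e j|.
pose P : {poly 'F_p} := (Theta j l)%:~R%:P + \sum_(1 <= k < tau.+1) c j l k *: 'X^k.
have PE y : P.[y] = Hpoly (Theta j l) (c j l) tau y.
  by rewrite /P /Hpoly hornerD hornerC horner_sum; congr (_ + _); apply: eq_bigr => k _;
     rewrite hornerZ hornerXn.
have P0 : P.[0] = (Theta j l)%:~R.
  rewrite /P hornerD hornerC horner_sum big1_seq ?addr0 // => k /andP [_].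
  rewrite mem_index_iota => /andP [k1 _].
  by rewrite hornerZ hornerXn expr0n; case: k k1 => // k _; rewrite mulr0.
have szP : (size P <= #|cnbrs e j|)%N.
  rewrite card_cnbrs; apply: (leq_trans (size_polyD _ _)); rewrite geq_max.
  apply/andP; split; first by apply: (leq_trans (size_polyC_leq1 _)).
  apply: (leq_trans (size_sum _ _ _)); apply/bigmax_leqP_seq => k; rewrite mem_index_iota => /andP [_ kt] _.
  by apply: (leq_trans (size_scale_leq _ _)); rewrite size_polyXn.
rewrite -P0 -(@lagrange0 _ _ (cnbrs e j) (@lab p N) P) //; last first.
  by move=> a b _ _; apply: lab_inj.
apply: eq_bigr => i _; rewrite /share PE /delta; congr (_ * _).
by apply: eq_bigl => r; rewrite in_setD1 andbC.
Qed.

Lemma sum_s0_Fp (p N n : nat) (e : rel 'I_N) (Theta : 'I_N -> 'I_n -> int)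
  (c : 'I_N -> 'I_n -> nat -> 'F_p) l : prime p -> (N < p)%N -> symmetric e ->
  ((\sum_i nat_of_ord (\sum_(j in cnbrs e i) share e Theta c j i l)%R)%N%:R : 'F_p)
  = (\sum_j Theta j l)%:~R.
Proof.
move=> pp Np se.
rewrite natr_sum.
under eq_bigr do rewrite (@natr_Zp (Zp_trunc (pdiv p))).
rewrite (big_morph (fun z : int => z%:~R : 'F_p) (@intrD _) (mulr0z 1)).
under [RHS]eq_bigr => j _ do rewrite -(@shares_j p N n e Theta c j l) //.
under eq_bigr => i _ do rewrite big_mkcond.
rewrite exchange_big; apply: eq_bigr => j _; rewrite [RHS]big_mkcond.
by apply: eq_bigr => i _; rewrite (@mem_cnbrsC N e j i se).
Qed.
From mathcomp Require Import lra zify.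

Lemma Fp_int_mod p (a b : int) : prime p -> (a%:~R : 'F_p) = b%:~R -> (a %% p)%Z = (b %% p)%Z.
Proof.
move=> pp hab.
have p0 : (p%:Z != 0)%R by rewrite eqz_nat -lt0n prime_gt0.
set d := a - b.
have hd : (d%:~R : 'F_p) = 0 by rewrite /d intrB hab subrr.
move: hd; rewrite (divz_eq d p) intrD intrM.
have -> : ((p%:Z)%:~R : 'F_p) = 0 by rewrite -[RHS](pchar_Fp_0 pp).
rewrite mulr0 add0r.
have := modz_ge0 d p0; have := ltz_pmod d (prime_gt0 pp : (0 < p%:Z)%R).
case E: (d %% p)%Z => [m|m] // mp _ hm.
have m0 : m = 0%N.
  move: (congr1 (@nat_of_ord _) hm); rewrite /= val_Fp_nat // modn_small //.
have ad : a = (d %/ p)%Z * p + b.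
  have hd : d = (d %/ p)%Z * p by rewrite {1}(divz_eq d p) E m0 addr0.
  by rewrite -hd /d subrK.
by rewrite ad modzMDl.
Qed.

Lemma round_int (R : realType) (k : int) (d : R) :
  `|d| < 2^-1 -> round_nearest (k%:~R + d) = k.
Proof.
rewrite /round_nearest => hd.
have h2 : (2^-1 : R) = 1/2 by rewrite div1r.
rewrite h2 in hd.
have [d0|d0] := leP 0 d.
  rewrite ger0_norm // in hd.
  have fl : Num.floor (k%:~R + d) = k.
    by apply: floor_def; rewrite intrD; apply/andP; split; lra.
  by rewrite fl h2 ifT //; lra.
rewrite ltr0_norm // in hd.
have fl : Num.floor (k%:~R + d) = k - 1.
  by apply: floor_def; rewrite subrK intrB; apply/andP; split; lra.
rewrite fl h2 ifF; last by rewrite intrB; apply/negbTE; rewrite -leNgt; lra.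
by apply: ceil_def; rewrite intrB; apply/andP; split; lra.
Qed.

Lemma decode_ok (R : realType) p sigma (S : int) : (0 < p)%N ->
  2 * `|S%:~R| < p%:R - 1 :> R ->
  decode R p sigma ((S %% p)%Z) = S%:~R / 10%:R ^+ sigma.
Proof.
move=> p0 hS; rewrite /decode.
have [S0|S0] := leP 0 S.
  have hSr : 0 <= S%:~R :> R by rewrite ler0z.
  rewrite ger0_norm // in hS.
  have Sp : (S < p%:Z)%R.
    by rewrite -(ltr_int R); lra.
  by rewrite modz_small ?S0 // ifT //; lra.
have hSr : S%:~R < 0 :> R by rewrite ltrz0.
rewrite ltr0_norm // in hS.
have hSp : (0 <= S + p%:Z)%R.
  by rewrite -(ler_int R) intrD; lra.
have hSp2 : (S + p%:Z < p%:Z)%R by rewrite gtrDr.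
have -> : (S %% p)%Z = S + p%:Z by rewrite -modzDr modz_small // hSp hSp2.
rewrite ifF; first by rewrite addrK.
by apply/negbTE; rewrite -ltNge intrD; lra.
Qed.

Lemma cons_step_mx (R : realType) N (e : rel 'I_N) (s : 'I_N -> R) i :
  cons_step e s i = (mh_matrix R e *m \col_j s j) i 0.
Proof.
rewrite /cons_step mxE [RHS](bigD1 i) //= !mxE; congr (_ + _).
rewrite [RHS]big_mkcond [LHS]big_mkcond; apply: eq_bigr => j _; rewrite !mxE.
case: ifP => jn; first by rewrite !inE in jn; case/andP: jn => -> _.
case: ifP => // ji; rewrite /mh_weight jn; by rewrite (negbTE ji) mul0r.
Qed.

Lemma iter_mx (R : realType) N (e : rel 'I_N) K (f : 'I_N -> R) i :
  iter K (cons_step e) f i = ((mh_matrix R e ^+ K) *m \col_j f j) i 0.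
Proof.
elim: K i => [|K IH] i; first by rewrite expr0 mul1mx mxE.
rewrite iterS cons_step_mx.
have -> : \col_j iter K (cons_step e) f j = (mh_matrix R e ^+ K) *m \col_j f j.
  by apply/matrixP => j k; rewrite mxE IH (ord1 k).
by rewrite mulmxA exprS mulmxE.
Qed.

Lemma coord_le_vnorm (R : realType) N (z : 'cV[R]_N) i : `|z i 0| <= vnorm2 z.
Proof.
rewrite /vnorm2 -sqrtr_sqr ler_sqrt ?sumr_ge0 // => [|j _]; last exact: sqr_ge0.
by rewrite (bigD1 i) //= lerDl sumr_ge0 // => j _; exact: sqr_ge0.
Qed.

Lemma spec_ub (R : realType) N (M : 'M[R]_N) x :
  vnorm2 x <= 1 -> vnorm2 (M *m x) <= spec_norm M.
Proof.
move=> hx; apply: ub_le_sup; last by exists x.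
pose C := \sum_i \sum_j `|M i j|.
have C0 : 0 <= C by rewrite sumr_ge0 // => i _; rewrite sumr_ge0.
exists (Num.sqrt (N%:R * C ^+ 2)) => y [x' hx' <-].
rewrite /vnorm2 ler_sqrt; last by rewrite mulr_ge0 ?sqr_ge0.
have -> : N%:R * C ^+ 2 = \sum_(i < N) C ^+ 2 by rewrite sumr_const card_ord mulr_natl.
apply: ler_sum => i _.
have hi : `|(M *m x') i 0| <= C.
  rewrite mxE; apply: (le_trans (ler_norm_sum _ _ _)).
  apply: (@le_trans _ _ (\sum_j `|M i j|)).
    apply: ler_sum => j _; rewrite normrM ler_piMr //.
    exact: (le_trans (@coord_le_vnorm _ _ x' j) hx').
  rewrite /C [leRHS](bigD1 i) //= lerDl sumr_ge0 // => k _; exact: sumr_ge0.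
move: hi; rewrite ler_norml => /andP [h1 h2]; nra.
Qed.

Lemma err_bound (R : realType) N (M : 'M[R]_N) (v : 'cV[R]_N) (P : R) i :
  0 < P -> (forall j, 0 <= v j 0 < P) ->
  `|(M *m v) i 0| <= P * Num.sqrt N%:R * spec_norm M.
Proof.
move=> P0 hv.
have N0 : (0 < N)%N by case: N M v i {hv} => [|N] _ _ [].
have Nr : 0 < N%:R :> R by rewrite ltr0n.
set s := P * Num.sqrt N%:R.
have s0 : 0 < s by rewrite mulr_gt0 // sqrtr_gt0.
have s2 : s ^+ 2 = P ^+ 2 * N%:R by rewrite exprMn sqr_sqrtr // ltW.
pose y := s^-1 *: v.
have hy : vnorm2 y <= 1.
  rewrite /vnorm2 -sqrtr1 ler_sqrt //.
  have -> : 1 = \sum_(j < N) (N%:R : R)^-1.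
    by rewrite sumr_const card_ord -(mulr_natr ((N%:R : R)^-1) N) mulVf ?gt_eqF.
  apply: ler_sum => j _; rewrite mxE exprMn exprVn s2 invfM mulrAC.
  rewrite ler_piMl ?invr_ge0 ?ltW // mulrC ltr_pdivrMr ?exprn_gt0 // mul1r.
  by have := hv j; case/andP => h1 h2; nra.
have -> : v = s *: y by rewrite /y scalerA mulfV ?gt_eqF // scale1r.
rewrite -scalemxAr mxE normrM gtr0_norm // ler_pM2l //.
exact: (le_trans (@coord_le_vnorm _ _ (M *m y) i) (@spec_ub _ _ M y hy)).
Qed.

Theorem theorem6p1 (R : realType) (N n T K sigma p : nat)
  (w : 'I_N -> R) (theta : 'I_T -> 'I_N -> 'I_n -> R)
  (Theta : 'I_T -> 'I_N -> 'I_n -> int)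
  (e : 'I_T -> rel 'I_N)
  (c : 'I_T -> 'I_N -> 'I_n -> nat -> 'F_p) :
  prime p ->
  (forall i, 0 < w i <= 1) ->
  (forall t i l, 10%:R ^+ sigma * (w i * theta t i l) = (Theta t i l)%:~R) ->
  (forall t, symmetric (e t)) ->
  (forall t i j, connect (e t) i j) ->
  (forall t i l, (0 < #|nbrs (e t) i|)%N -> c t i l #|nbrs (e t) i| != 0) ->
  (N < p)%N ->
  (forall t i l,
     1 + 2 * 10%:R ^+ sigma * N%:R * `|theta t i l| < p%:R :> R) ->
  (forall t, 2 * p%:R * Num.sqrt N%:R *
     spec_norm (N%:R *: (mh_matrix R (e t)) ^+ K - const_mx 1) < 1 :> R) ->
  forall (t : 'I_T) (i : 'I_N) (l : 'I_n),
    @tilde_theta R p sigma N n K (e t) (Theta t) (c t) i l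
    = \sum_(j < N) w j * theta t j l.
Proof.
move=> pp hw hTh hsym _ _ Np hth hK t i l.
have N0 : (0 < N)%N by case: N w theta Theta e c Np hth hK i {hw hTh hsym} => [|N] ? ? ? ? ? ? ? ? [].
rewrite /tilde_theta /sK iter_mx.
set A := mh_matrix R (e t).
set v := \col_j s0 R (e t) (Theta t) (c t) j l.
set M := N%:R *: A ^+ K - const_mx 1.
pose X := (\sum_j nat_of_ord (\sum_(k in cnbrs (e t) j) share (e t) (Theta t) (c t) k j l)%R)%N.
have hsum : \sum_j v j 0 = X%:R.
  by rewrite /X natr_sum; apply: eq_bigr => j _; rewrite mxE.
have hN : N%:R * (A ^+ K *m v) i 0 = (X%:Z)%:~R + (M *m v) i 0.
  have -> : N%:R * (A ^+ K *m v) i 0 = ((N%:R *: A ^+ K) *m v) i 0.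
    by rewrite -scalemxAl [RHS]mxE.
  have -> : N%:R *: A ^+ K = M + const_mx 1 by rewrite /M subrK.
  rewrite mulmxDl mxE addrC; congr (_ + _).
  rewrite -pmulrn -hsum mxE; apply: eq_bigr => j _; by rewrite mxE mul1r.
have hd : `|(M *m v) i 0| < 2^-1.
  have p0 : 0 < p%:R :> R by rewrite ltr0n prime_gt0.
  have hv : forall j, 0 <= v j 0 < p%:R.
    move=> j; rewrite mxE /s0 ler0n /= ltr_nat.
    apply: (leq_trans (ltn_ord (\sum_(k in cnbrs (e t) j) share (e t) (Theta t) (c t) k j l)%R)).
    by rewrite Fp_cast.
  have hb := @err_bound R N M v p%:R i p0 hv.
  have hk := hK t; rewrite -/A -/M in hk.
  rewrite -div1r; lra.
rewrite hN round_int //.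
have hmod : (X%:Z %% p)%Z = ((\sum_j Theta t j l) %% p)%Z.
  apply: Fp_int_mod => //; rewrite -pmulrn.
  exact: (@sum_s0_Fp p N n (e t) (Theta t) (c t) l pp Np (hsym t)).
have m0 : 0 < 10%:R ^+ sigma :> R by rewrite exprn_gt0 // ltr0n.
have hS : (\sum_j Theta t j l)%:~R = 10%:R ^+ sigma * \sum_j w j * theta t j l :> R.
  rewrite (big_morph (fun z : int => z%:~R : R) (@intrD R) (mulr0z 1)) mulr_sumr.
  by apply: eq_bigr => j _; rewrite hTh.
rewrite hmod decode_ok ?prime_gt0 //.
  by rewrite hS mulrC mulKf // gt_eqF.
rewrite hS normrM (ger0_norm (ltW m0)).
have h1 : `|\sum_j w j * theta t j l| <= \sum_j `|theta t j l|.
  apply: (le_trans (ler_norm_sum _ _ _)); apply: ler_sum => j _.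
  have := hw j; case/andP => w0 w1.
  by rewrite normrM (gtr0_norm w0) ler_piMl.
have h2 : \sum_j 2 * 10%:R ^+ sigma * `|theta t j l| < \sum_(j < N) (p%:R - 1) / N%:R :> R.
  apply: ltr_sum; first by apply/hasP; exists i; rewrite ?mem_index_enum.
  move=> j _; rewrite ltr_pdivlMr ?ltr0n //; have := hth t j l; lra.
have h3 : \sum_(j < N) (p%:R - 1) / N%:R = p%:R - 1 :> R.
  by rewrite sumr_const card_ord -(mulr_natr ((p%:R - 1) / N%:R) N) divfK // gt_eqF // ltr0n.
rewrite h3 -mulr_sumr in h2.
have h1' := h1; rewrite -(ler_pM2l m0) in h1'.
lra.
Qed.
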